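(* Let $k$ be a positive integer and let $p$ be the smallest positive integer such that $k<\kappa_p$ (in dimension $d=2$). If $p$ is a multiple of $4$ and $k-\kappa_{p-1}$ is an odd multiple of $p/2$, then $\delta_z(2,k)\neq\lfloor\lambda(2,k)\rfloor$.
   Context: A point of $\mathbb{Z}^2$ is primitive if its coordinates are relatively prime; $\mathbb{P}^2_\circ$ denotes the set of primitive points of $\mathbb{Z}^2$ whose first non-zero coordinate is positive. For a finite $\mathcal{X}\subset\mathbb{R}^2$, $\kappa(\mathcal{X})=\max_{i\in\{1,2\}}\sum_{x\in\mathcal{X}}|x_i|$, and $\delta_z(2,k)=\max\{|\mathcal{X}|:\mathcal{X}\subset\mathbb{P}^2_\circ,\ \kappa(\mathcal{X})\le k\}$. $B(2,p)=\{x\in\mathbb{R}^2:\|x\|_1\le p\}$; $N_p=|B(2,p)\cap\mathbb{P}^2_\circ|$ and $\kappa_p=\kappa(B(2,p)\cap\mathbb{P}^2_\circ)$ (with $N_0=\kappa_0=0$). With $p$ as in the claim, $\lambda(2,k)=N_{p-1}+\frac{2(k-\kappa_{p-1})}{p}$. *)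

(* Defs.v *)
From mathcomp Require Import all_boot all_order all_algebra.
From mathcomp Require Import boolp.
Set Implicit Arguments. Unset Strict Implicit. Unset Printing Implicit Defensive.
Import Order.TTheory GRing.Theory Num.Theory.

Definition pt := (int * int)%type.

Definition inP2 (x : pt) : bool :=
  (gcdz x.1 x.2 == 1%N) && ((0 < x.1)%R || ((x.1 == 0) && (0 < x.2)%R)).

(* kappa(X) = max_i sum_{x in X} |x_i|  (a finite set X given as a
   duplicate-free list). *)
Definition kappa (X : seq pt) : nat :=
  maxn (\sum_(x <- X) `|x.1|%N) (\sum_(x <- X) `|x.2|%N).

Definition admissible (k : nat) (X : seq pt) : bool :=
  uniq X && all inP2 X && (kappa X <= k).

Definition has_adm (k n : nat) : bool :=
  `[< exists X : seq pt, admissible k X /\ size X = n >].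

Lemma has_adm0 k : exists n, has_adm k n.
Proof. exists 0%N; apply/asboolP; exists [::]; split => //; by rewrite /admissible /kappa !big_nil. Qed.

Lemma inP2_norm (x : pt) : inP2 x -> (0 < `|x.1|%N + `|x.2|%N)%N.
Proof.
case: x => a b /andP [/eqP g _] /=.
rewrite addn_gt0 !absz_gt0.
case: (eqVneq a 0) => [a0|//]; case: (eqVneq b 0) => [b0|//].
by move: g; rewrite a0 b0.
Qed.

Lemma admissible_size k X : admissible k X -> (size X <= 2 * k)%N.
Proof.
case/andP => /andP [_ hP] hk.
have -> : size X = \sum_(x <- X) 1%N by rewrite sum1_size.
apply: (@leq_trans (\sum_(x <- X) (`|x.1|%N + `|x.2|%N))).
  rewrite big_seq [X in (_ <= X)%N]big_seq; apply: leq_sum => x xX.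
  by apply: inP2_norm; move/allP: hP; apply.
rewrite big_split /=; move: hk; rewrite /kappa geq_max => /andP [h1 h2].
by rewrite mul2n -addnn leq_add.
Qed.

Lemma has_adm_bound k n : has_adm k n -> (n <= 2 * k)%N.
Proof. by move/asboolP => [X [hX <-]]; apply: admissible_size hX. Qed.

Definition delta_z2 (k : nat) : nat :=
  ex_maxn (has_adm0 k) (@has_adm_bound k).

Definition coords (p : nat) : seq int := [seq (i%:Z - p%:Z)%R | i <- iota 0 (2 * p).+1].
Definition ballP (p : nat) : seq pt :=
  [seq x <- [seq (a, b) | a <- coords p, b <- coords p]
     | inP2 x && (`|x.1|%N + `|x.2|%N <= p)%N].

Definition Np (p : nat) : nat := size (ballP p).
Definition kappap (p : nat) : nat := kappa (ballP p).

Definition lambda2 (k p : nat) : rat :=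
  ((Np p.-1)%:R + 2%:R * ((k%:Z - (kappap p.-1)%:Z)%:~R) / p%:R)%R.

(* Main.v *)
Require Import Defs.
From mathcomp Require Import all_boot all_order all_algebra zify ring.
From mathcomp Require Import boolp.
Import GRing.Theory Num.Theory.
Set Implicit Arguments. Unset Strict Implicit.

Definition nrm (x : pt) : nat := (`|x.1| + `|x.2|)%N.

Lemma sum_inter (T : eqType) (s t : seq T) (F : T -> nat) : uniq s -> uniq t ->
  (\sum_(x <- s | x \in t) F x = \sum_(x <- t | x \in s) F x)%N.
Proof.
move=> us ut; rewrite -big_filter -[RHS]big_filter; apply: perm_big.
apply: uniq_perm; rewrite ?filter_uniq // => x; by rewrite !mem_filter andbC.
Qed.

Lemma odd_sum (T : eqType) (s : seq T) (P : pred T) (F : T -> nat) :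
  (forall x, x \in s -> P x -> odd (F x)) ->
  odd (\sum_(x <- s | P x) F x) = odd (count P s).
Proof.
elim: s => [|y s IH] H; first by rewrite big_nil.
rewrite big_cons /=; case Py: (P y) => /=.
  rewrite oddD IH ?H ?mem_head //; last by move=> x xs; apply: H; rewrite inE xs orbT.
rewrite IH //; by move=> x xs; apply: H; rewrite inE xs orbT.
Qed.

Lemma coords_mem (q : nat) (a : int) : (`|a| <= q)%N -> a \in coords q.
Proof.
move=> h; apply/mapP; exists (absz (a + Posz q)%R); last lia.
rewrite mem_iota; lia.
Qed.

Lemma mem_ball q x : (x \in ballP q) = inP2 x && (nrm x <= q)%N.
Proof.
rewrite /ballP mem_filter /nrm; case H: (inP2 x && _) => //; rewrite andTb.
case/andP: H => _; case: x => a b h; rewrite /= in h.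
apply: (@allpairs_f _ _ _ (fun x y => (x, y))); apply: coords_mem; lia.
Qed.

Lemma ball_uniq q : uniq (ballP q).
Proof.
rewrite /ballP filter_uniq // allpairs_uniq //.
- rewrite /coords map_inj_uniq ?iota_uniq // => i j h; lia.
- rewrite /coords map_inj_uniq ?iota_uniq // => i j h; lia.
by move=> [a b] [c d] _ _ /= [-> ->].
Qed.

Definition sw (x : pt) : pt := if (x.2 < 0)%R then (- x.2, - x.1)%R else (x.2, x.1).

Lemma inP2_nonneg x : inP2 x -> (0 <= x.1)%R.
Proof. case/andP => _ /orP [h|/andP [/eqP -> _]]; lia. Qed.

Lemma sw_inP2 x : inP2 x -> inP2 (sw x).
Proof.
case: x => a b /andP [g h]; rewrite /= in g h; rewrite /sw /=.
case: ifP => hb; apply/andP; split => /=.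
- by rewrite /gcdz !abszN gcdnC.
- apply/orP; left; lia.
- by rewrite /gcdz gcdnC.
- move: h => /orP [h|/andP [/eqP a0 hb0]].
  + case: (eqVneq b 0) => [b0|bn0]; first by apply/orP; right; apply/andP; split; [apply/eqP; lia | lia].
    apply/orP; left; lia.
  + apply/orP; left; lia.
Qed.

Lemma swK x : inP2 x -> sw (sw x) = x.
Proof.
case: x => a b h; have ha := inP2_nonneg h; rewrite /= in ha; rewrite /sw /=.
case hb: (b < 0)%R => /=.
  have ha' : (0 < a)%R.
    move: h => /andP [_ /orP [//|/andP [_ hb']]]; rewrite /= in hb'; lia.
  rewrite ifT; [by rewrite !opprK | lia].
by rewrite ifF //; lia.
Qed.

Lemma sw_nrm x : nrm (sw x) = nrm x.
Proof. rewrite /nrm /sw; case: ifP => _ /=; rewrite ?abszN; lia. Qed.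

Lemma ball_sym q : (\sum_(x <- ballP q) `|x.1| = \sum_(x <- ballP q) `|x.2|)%N.
Proof.
have P : perm_eq (map sw (ballP q)) (ballP q).
  apply: uniq_perm.
  - rewrite map_inj_in_uniq ?ball_uniq // => x y.
    rewrite !mem_ball => /andP [hx _] /andP [hy _] e.
    by rewrite -(swK hx) e swK.
  - exact: ball_uniq.
  move=> x; apply/mapP/idP.
    by move=> [y]; rewrite !mem_ball => /andP [hy hn] ->; rewrite sw_inP2 // sw_nrm.
  rewrite mem_ball => /andP [hx hn]; exists (sw x); last by rewrite swK.
  by rewrite mem_ball sw_inP2 // sw_nrm.
rewrite -(perm_big _ P) big_map; apply: eq_bigr => [[a b]] _.
rewrite /sw /=; case: ifP => _ /=; by rewrite ?abszN.
Qed.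

Lemma odd_x1 p x : (4 %| p)%N -> inP2 x -> nrm x = p -> odd `|x.1|.
Proof.
move=> p4 /andP [g _] hn; apply/negPn/negP => ev.
have d1 : (2 %| `|x.1|)%N by rewrite dvdn2.
have d2 : (2 %| `|x.2|)%N by rewrite /nrm in hn; lia.
move: g; rewrite /gcdz => /eqP [] g.
have : (2 %| gcdn `|x.1| `|x.2|)%N by rewrite dvdn_gcd d1 d2.
by rewrite g.
Qed.

Lemma key (k p m : nat) (X : seq pt) : (0 < p)%N -> (4 %| p)%N -> odd m ->
  k = (kappap p.-1 + m * (p %/ 2))%N -> admissible k X -> (size X < Np p.-1 + m)%N.
Proof.
move=> p0 p4 om hk /andP [/andP [uX aP] hX].
set q := p.-1 in hk *; set t := ballP q.
have ut : uniq t := ball_uniq q.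
have hS : kappap q = (\sum_(x <- t) `|x.1|)%N by rewrite /kappap /kappa -ball_sym maxnn.
move: hX; rewrite /kappa geq_max => /andP [hA hB].
rewrite ltnNge; apply/negP => hsz.
have e1 : (\sum_(x <- X) `|x.1| = \sum_(x <- t | x \in X) `|x.1| + \sum_(x <- X | x \notin t) `|x.1|)%N.
  by rewrite (bigID (fun x => x \in t)) /= sum_inter.
have e2 : (\sum_(x <- t) `|x.1| = \sum_(x <- t | x \in X) `|x.1| + \sum_(x <- t | x \notin X) `|x.1|)%N.
  by rewrite (bigID (fun x => x \in X)) /=.
have n1 : (\sum_(x <- X) `|x.1| + \sum_(x <- X) `|x.2| = \sum_(x <- t | x \in X) nrm x + \sum_(x <- X | x \notin t) nrm x)%N.
  by rewrite -big_split /= (bigID (fun x => x \in t)) /= sum_inter.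
have n2 : (\sum_(x <- t) `|x.1| + \sum_(x <- t) `|x.2| = \sum_(x <- t | x \in X) nrm x + \sum_(x <- t | x \notin X) nrm x)%N.
  by rewrite -big_split /= (bigID (fun x => x \in X)) /=.
have o2 : (\sum_(x <- t | x \notin X) nrm x <= q * count (fun x => x \notin X) t)%N.
  rewrite -sum1_count big_distrr /= big_seq_cond [X in (_ <= X)%N]big_seq_cond.
  apply: leq_sum => x /andP [xt _]; rewrite muln1.
  by move: xt; rewrite mem_ball => /andP [].
have o2' : (\sum_(x <- t | x \notin X) `|x.1| <= \sum_(x <- t | x \notin X) nrm x)%N.
  by apply: leq_sum => x _; rewrite /nrm leq_addr.
have o1 : (\sum_(x <- X | x \notin t) nrm x = p * count (fun x => x \notin t) X + \sum_(x <- X | x \notin t) (nrm x - p))%N.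
  rewrite -sum1_count big_distrr /= -big_split /= big_seq_cond [RHS]big_seq_cond.
  apply: eq_bigr => x /andP [xX xt].
  have : inP2 x by move/allP: aP; apply.
  move: xt; rewrite mem_ball => /negP h hP.
  have : ~~ (nrm x <= q)%N by apply/negP => h'; apply: h; rewrite hP h'.
  rewrite /q; lia.
have c1 : size X = (count (fun x => x \in t) X + count (fun x => x \notin t) X)%N.
  by rewrite count_predC.
have c2 : size t = (count (fun x => x \in X) t + count (fun x => x \notin X) t)%N.
  by rewrite count_predC.
have c3 : count (fun x => x \in t) X = count (fun x => x \in X) t.
  by rewrite -!sum1_count sum_inter.
have hN : Np q = size t by [].
rewrite hN in hsz.
have hj : p = (2 * (p %/ 2))%N by lia.
set j := (p %/ 2)%N in hk hj.
set c := count (fun x => x \notin X) t in c2 o2.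
set d := count (fun x => x \notin t) X in c1 o1.
set E := (\sum_(x <- X | x \notin t) (nrm x - p))%N in o1.
have hdc : (m + c <= d)%N by lia.
have hpd : (p * (m + c) <= p * d)%N by rewrite leq_mul2l hdc orbT.
have hpc : (p * c = q * c + c)%N by rewrite /q -[in LHS](prednK p0) mulSn addnC.
have hmp : (p * (m + c) = m * j * 2 + p * c)%N by rewrite hj; ring.
have hsym : (\sum_(x <- t) `|x.1| = \sum_(x <- t) `|x.2|)%N := ball_sym q.
have [c0 E0] : c = 0%N /\ E = 0%N.
  rewrite -hsym in n2; rewrite hS in hk; move: hpd hmp hpc o2 o1 hk.
  generalize (p * d)%N (p * (m + c))%N (p * c)%N (q * c)%N (m * j)%N; intros; lia.
have O20 : (\sum_(x <- t | x \notin X) nrm x = 0)%N by move: o2; rewrite c0 muln0; lia.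
have hpm : (p * m = m * j * 2)%N by rewrite hj; ring.
have hdm : (p * d <= p * m)%N.
  rewrite -hsym in n2; rewrite hS in hk; move: hpm o1 hk.
  generalize (p * d)%N (p * m)%N (m * j)%N; intros; lia.
have dm : d = m by apply/eqP; rewrite eqn_leq -(leq_pmul2l p0) hdm /=; lia.
have Ak : (\sum_(x <- X) `|x.1| = k)%N.
  rewrite -hsym in n2; rewrite hS in hk; move: hpm o1 hk; rewrite dm.
  generalize (p * m)%N (m * j)%N; intros; lia.
have Sm : (\sum_(x <- X | x \notin t) `|x.1| = m * j)%N.
  rewrite hS in hk; move: hk; generalize (m * j)%N; intros; lia.
have allp := sum_nat_seq_eq0 X (fun x => x \notin t) (fun x => nrm x - p)%N.
rewrite -/E E0 eqxx in allp; move/esym/allP: allp => allp.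
have := odd_sum (P := fun x => x \notin t) (F := fun x => `|x.1|%N) (s := X).
rewrite Sm -/d dm om oddM.
have -> : odd j = false.
  have : (2 %| j)%N by lia.
  by rewrite dvdn2 => /negPf.
rewrite andbF => h; suff : false = true by [].
apply: h => x xX xt.
have hP : inP2 x by move/allP: aP; apply.
apply: (odd_x1 p4 hP).
have := allp x xX; rewrite /= xt /= => /eqP h0.
move: xt; rewrite mem_ball => /negP h.
have : ~~ (nrm x <= q)%N by apply/negP => h'; apply: h; rewrite hP h'.
rewrite /q; lia.
Qed.

Theorem lemma3p3 (k p : nat) :
  (0 < k)%N ->
  (0 < p)%N -> (k < kappap p)%N ->
  (forall q : nat, (0 < q)%N -> (q < p)%N -> ~~ (k < kappap q)%N) ->
  (4 %| p)%N ->
  (exists m : nat, odd m /\ (Posz k - Posz (kappap p.-1))%R = Posz (m * (p %/ 2))) ->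
  Posz (delta_z2 k) <> Num.floor (lambda2 k p).
Proof.
move=> k0 p0 hk _ p4 [m [om hm]].
have hk' : k = (kappap p.-1 + m * (p %/ 2))%N by lia.
have hj : p = (2 * (p %/ 2))%N by lia.
have hl : lambda2 k p = ((Posz (Np p.-1 + m))%:~R)%R.
  rewrite /lambda2 hm.
  have -> : ((Posz (m * (p %/ 2)))%:~R : rat)%R = ((m * (p %/ 2))%:R)%R by [].
  have -> : ((Posz (Np p.-1 + m))%:~R : rat)%R = ((Np p.-1 + m)%:R)%R by [].
  have jn : ((p %/ 2)%:R : rat)%R != 0%R by rewrite pnatr_eq0; lia.
  rewrite [in (p%:R)%R]hj !natrM !natrD; field; rewrite ?mulf_neq0 //.
rewrite hl intrKfloor /delta_z2; case: ex_maxnP => d /asboolP [X [hX <-]] _.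
have := key p0 p4 om hk' hX; lia.
Qed.
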